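(* Let $S \in \mathbb{R}^{n\times n}$ be a diagonal matrix whose diagonal entries are strictly positive and bounded. Then for every $G \in \mathbb{R}^{m \times n}$ with $G \neq 0$, $$\langle G, \operatorname{PolarFactor}(G S) \rangle > 0.$$
   Context: $\langle A, B\rangle = \operatorname{tr}(A^\top B)$ denotes the Frobenius inner product. For a matrix $X$, $\operatorname{PolarFactor}(X) = X (X^\top X)^{-1/2}$, where $(X^\top X)^{-1/2}$ is the positive semidefinite inverse square root taken on the support of $X^\top X$ (Moore–Penrose inverse square root when $X$ is rank deficient); equivalently, if $X = U\Sigma V^\top$ is a compact singular value decomposition, $\operatorname{PolarFactor}(X) = UV^\top$. No squareness or full-rank assumption is made on $G$. *)

(* Defs.v *)
From HB Require Import structures.
From mathcomp Require Import all_boot all_order all_algebra.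
From mathcomp Require Import reals.
From Stdlib Require Import ClassicalEpsilon.
Set Implicit Arguments. Unset Strict Implicit. Unset Printing Implicit Defensive.
Import Order.TTheory GRing.Theory Num.Theory.
Local Open Scope ring_scope.

Definition frob (R : realType) (m n : nat) (A B : 'M[R]_(m, n)) : R :=
  \tr (A^T *m B).

Definition is_polar_of (R : realType) (m n : nat) (X Q : 'M[R]_(m, n)) : Prop :=
  exists (r : nat) (U : 'M[R]_(m, r)) (V : 'M[R]_(n, r)) (s : 'rV[R]_r),
    [/\ U^T *m U = 1%:M, V^T *m V = 1%:M, (forall i, 0 < s 0 i),
        X = U *m diag_mx s *m V^T & Q = U *m V^T].

(* PolarFactor(X) = U V^T for a compact SVD of X (well defined: independent
   of the chosen SVD).  Chosen classically; defaults to 0 only if no compact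
   SVD existed, which never happens over the reals. *)
Definition PolarFactor (R : realType) (m n : nat) (X : 'M[R]_(m, n)) : 'M[R]_(m, n) :=
  match excluded_middle_informative (exists Q, is_polar_of X Q) with
  | left h => proj1_sig (constructive_indefinite_description _ h)
  | right _ => 0
  end.

(* Main.v *)
Require Import Defs.
From HB Require Import structures.
From mathcomp Require Import all_boot all_order all_algebra.
From mathcomp Require Import reals complex.
From mathcomp Require Import ring lra zify.
From Stdlib Require Import ClassicalEpsilon.
Set Implicit Arguments. Unset Strict Implicit. Unset Printing Implicit Defensive.
Import Order.TTheory GRing.Theory Num.Theory.
Local Open Scope ring_scope.

Definition dotv (R : realType) n (u v : 'rV[R]_n) : R := (u *m v^T) 0 0.

Lemma dotvE (R : realType) n (u v : 'rV[R]_n) : dotv u v = \sum_i u 0 i * v 0 i.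
Proof. by rewrite /dotv mxE; apply: eq_bigr => i _; rewrite mxE. Qed.

Lemma dotvC (R : realType) n (u v : 'rV[R]_n) : dotv u v = dotv v u.
Proof. by rewrite !dotvE; apply: eq_bigr => i _; rewrite mulrC. Qed.

Lemma dotv_ge0 (R : realType) n (u : 'rV[R]_n) : 0 <= dotv u u.
Proof. by rewrite dotvE; apply: sumr_ge0 => i _; rewrite -expr2 sqr_ge0. Qed.

Lemma dotv_gt0 (R : realType) n (u : 'rV[R]_n) : u != 0 -> 0 < dotv u u.
Proof.
move=> nz; rewrite lt_def dotv_ge0 andbT; apply: contra nz => /eqP.
rewrite dotvE => /psumr_eq0P H; apply/eqP/rowP => j; rewrite mxE.
have := H (fun k _ => ltac:(by rewrite -expr2 sqr_ge0)) j isT.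
by rewrite -expr2 => /eqP; rewrite sqrf_eq0 => /eqP ->.
Qed.

Lemma ReD (R : realType) (x y : R[i]) : complex.Re (x + y) = complex.Re x + complex.Re y.
Proof. by case: x => a b; case: y => c d. Qed.
Lemma ImD (R : realType) (x y : R[i]) : complex.Im (x + y) = complex.Im x + complex.Im y.
Proof. by case: x => a b; case: y => c d. Qed.
Lemma Re_sum (R : realType) n (F : 'I_n -> R[i]) : complex.Re (\sum_i F i) = \sum_i complex.Re (F i).
Proof. by elim/big_rec2: _ => // i a b _ <-; rewrite ReD. Qed.
Lemma Im_sum (R : realType) n (F : 'I_n -> R[i]) : complex.Im (\sum_i F i) = \sum_i complex.Im (F i).
Proof. by elim/big_rec2: _ => // i a b _ <-; rewrite ImD. Qed.
Lemma ReMr (R : realType) (x : R[i]) (k : R) : complex.Re (x * (k%:C)%C) = complex.Re x * k.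
Proof. by case: x => a b /=; rewrite mulr0 subr0. Qed.
Lemma ImMr (R : realType) (x : R[i]) (k : R) : complex.Im (x * (k%:C)%C) = complex.Im x * k.
Proof. by case: x => a b /=; rewrite mulr0 add0r. Qed.
Lemma ReM (R : realType) (x y : R[i]) : complex.Re (x * y) = complex.Re x * complex.Re y - complex.Im x * complex.Im y.
Proof. by case: x => a b; case: y => c d. Qed.
Lemma ImM (R : realType) (x y : R[i]) : complex.Im (x * y) = complex.Re x * complex.Im y + complex.Im x * complex.Re y.
Proof. by case: x => a b; case: y => c d /=; rewrite addrC. Qed.

Lemma dotv_lin (R : realType) n (a b : R) (u v z : 'rV[R]_n) :
  dotv (a *: u + b *: v) z = a * dotv u z + b * dotv v z.
Proof.
rewrite !dotvE !mulr_sumr -big_split /=; apply: eq_bigr => i _.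
by rewrite !mxE mulrDl !mulrA.
Qed.

Lemma mx11_tr (R : realType) (M : 'M[R]_1) : M^T 0 0 = M 0 0.
Proof. by rewrite mxE. Qed.

Lemma real_eig (R : realType) n (B : 'M[R]_n) (w : 'rV[R[i]]_n) (a : R[i]) :
  B^T = B -> w != 0 -> w *m map_mx (real_complex R) B = a *: w ->
  complex.Im a = 0 /\ exists2 x : 'rV[R]_n, x != 0 & x *m B = complex.Re a *: x.
Proof.
move=> sB wnz hw.
set x := map_mx (@complex.Re R) w; set y := map_mx (@complex.Im R) w.
set al := complex.Re a; set be := complex.Im a.
have hx : x *m B = al *: x - be *: y.
  apply/rowP => j; have := congr1 (fun M : 'M[R[i]]_(1,n) => complex.Re (M 0 j)) hw.
  rewrite /= !mxE Re_sum ReM => <-.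
  by apply: eq_bigr => i _; rewrite !mxE ReMr.
have hy : y *m B = al *: y + be *: x.
  apply/rowP => j; have := congr1 (fun M : 'M[R[i]]_(1,n) => complex.Im (M 0 j)) hw.
  rewrite /= !mxE Im_sum ImM => <-.
  by apply: eq_bigr => i _; rewrite !mxE ImMr.
have key : dotv (x *m B) y = dotv (y *m B) x.
  rewrite /dotv -mx11_tr !trmx_mul trmxK sB mulmxA //.
have xy : x != 0 \/ y != 0.
  case: (eqVneq x 0) => [x0|]; last by left.
  case: (eqVneq y 0) => [y0|]; last by right.
  exfalso; move/negP: wnz; apply; apply/eqP/rowP => j.
  have := congr1 (fun M : 'rV[R]_n => M 0 j) x0; have := congr1 (fun M : 'rV[R]_n => M 0 j) y0.
  rewrite !mxE; case: (w 0 j) => c d /= -> -> //.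
have pos : 0 < dotv x x + dotv y y.
  case: xy => h.
    by apply: ltr_pwDl; [apply: dotv_gt0|apply: dotv_ge0].
  by apply: ltr_pwDr; [apply: dotv_gt0|apply: dotv_ge0].
have be0 : be = 0.
  move: key; rewrite hx hy -scaleNr !dotv_lin (dotvC y x) => /eqP.
  rewrite -subr_eq0 => /eqP H.
  have : be * (dotv x x + dotv y y) = 0.
    by rewrite -[RHS]oppr0 -H; ring.
  by move/eqP; rewrite mulf_eq0 (gt_eqF pos) orbF => /eqP.
split => //.
case: xy => h; [exists x|exists y] => //.
  by rewrite hx be0 scale0r subr0.
by rewrite hy be0 scale0r addr0.
Qed.

Lemma trmx_mul_self0 (R : realType) p q (M : 'M[R]_(p, q)) : M^T *m M = 0 -> M = 0.
Proof.
move=> H; apply/matrixP => i j; rewrite mxE.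
have := congr1 (fun N : 'M[R]_q => N j j) H; rewrite !mxE => /eqP.
rewrite psumr_eq0; last by move=> k _; rewrite mxE -expr2 sqr_ge0.
move=> /allP /(_ i (mem_index_enum _)) /=; rewrite mxE -expr2 sqrf_eq0 => /eqP //.
Qed.

Lemma trmx_exp (R : realType) n' (B : 'M[R]_n'.+1) k : B^T = B -> (B ^+ k)^T = B ^+ k.
Proof.
move=> sB; elim: k => [|k IH]; first by rewrite !expr0 trmx1.
by rewrite [in LHS]exprS -mulmxE trmx_mul IH sB mulmxE -exprSr.
Qed.

Lemma nilp_sym (R : realType) n' (B : 'M[R]_n'.+1) k : B^T = B -> B ^+ k.+1 = 0 -> B = 0.
Proof.
move=> sB; move: k; apply: ltn_ind => k IH Hk.
case: k IH Hk => [|k] IH Hk; first by rewrite expr1 in Hk.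
have Hj : B ^+ ((k.+3 %/ 2) + (k.+3 %/ 2)) = 0.
  have -> : ((k.+3 %/ 2) + (k.+3 %/ 2) = ((k.+3 %/ 2) + (k.+3 %/ 2) - k.+2) + k.+2)%N by lia.
  by rewrite exprD Hk mulr0.
rewrite exprD -mulmxE -{1}(trmx_exp _ sB) in Hj.
have := trmx_mul_self0 Hj.
have -> : (k.+3 %/ 2 = (k.+3 %/ 2).-1.+1)%N by lia.
by apply: IH; lia.
Qed.

Lemma eig_nz (R : realType) n' (B : 'M[R]_n'.+1) : B^T = B -> B != 0 ->
  exists (mu : R) (x : 'rV[R]_n'.+1), [/\ x != 0, mu != 0 & x *m B = mu *: x].
Proof.
move=> sB Bnz.
have [m [q Hq Hp]] := multiplicity_XsubC (char_poly B) 0.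
have cpnz : char_poly B != 0 by apply: monic_neq0; apply: char_poly_monic.
rewrite cpnz /= in Hq.
have [/eqP sq1|sq] := eqVneq (size q) 1%N.
  have [c cnz qc] := size_poly1P q sq1.
  exfalso; move/negP: Bnz; apply; apply/eqP.
  have CH := Cayley_Hamilton B.
  rewrite Hp qc subr0 rmorphM /= rmorphXn /= horner_mx_X horner_mx_C in CH.
  have Bm : B ^+ m = 0.
    move: CH => /eqP; rewrite -mulmxE mul_scalar_mx scaler_eq0 (negbTE cnz) /=.
    by move/eqP.
  case: m {Hp CH} Bm => [|m] Bm.
    by move: Bm; rewrite expr0 => /eqP; rewrite oner_eq0.
  exact: nilp_sym sB Bm.
set toC := real_complex R.
have : size (map_poly toC q) != 1%N by rewrite size_map_poly.
move=> /closed_rootP [a ra].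
have anz : a != 0.
  apply: contra Hq => /eqP a0; move: ra; rewrite a0 /root horner_map /=.
  by rewrite -(rmorph0 toC) => /eqP /complexI ->.
have : eigenvalue (map_mx toC B) a.
  rewrite eigenvalue_root_char -map_char_poly Hp rmorphM rootM /=.
  by rewrite ra.
move=> /eigenvalueP [w hw wnz].
have [Ima [x xnz hx]] := real_eig sB wnz hw.
exists (complex.Re a), x; split => //.
apply: contra anz => /eqP Rea; apply/eqP.
by move: Ima Rea; clear -a; case: a => ? ? /= -> ->.
Qed.

Lemma mx11P (R : realType) (A B : 'M[R]_1) : A 0 0 = B 0 0 -> A = B.
Proof. by move=> H; apply/matrixP => i j; rewrite !ord1. Qed.

Lemma eig_pos (R : realType) m n' (X : 'M[R]_(m, n'.+1)) : X != 0 ->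
  exists (mu : R) (v : 'rV[R]_n'.+1),
    [/\ 0 < mu, v *m v^T = 1%:M & v *m (X^T *m X) = mu *: v].
Proof.
move=> Xnz.
have sB : (X^T *m X)^T = X^T *m X by rewrite trmx_mul trmxK.
have Bnz : X^T *m X != 0 by apply: contra Xnz => /eqP /trmx_mul_self0 ->.
have [mu [x [xnz munz hx]]] := eig_nz sB Bnz.
have dpos := dotv_gt0 xnz.
have mupos : 0 < mu.
  have e : mu * dotv x x = dotv (x *m X^T) (x *m X^T).
    rewrite /dotv -[in RHS]mulmxA trmx_mul trmxK !mulmxA -(mulmxA x) hx.
    by rewrite -scalemxAl [in RHS]mxE.
  rewrite lt_def munz /=.
  have := dotv_ge0 (x *m X^T); rewrite -e.
  by rewrite pmulr_lge0.
set c := Num.sqrt (dotv x x).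
have cpos : 0 < c by rewrite sqrtr_gt0.
exists mu, (c^-1 *: x); split => //.
  apply: mx11P; rewrite -scalemxAl linearZ /= -scalemxAr !mxE -/(dotv x x) eqxx mulr1n.
  rewrite mulrA -expr2 exprVn sqr_sqrtr ?dotv_ge0 //.
  rewrite (_ : \sum_j _ = dotv x x) ?mulVf ?gt_eqF // dotvE.
  by apply: eq_bigr => j _; rewrite mxE.
by rewrite -scalemxAl hx !scalerA mulrC.
Qed.

Lemma svd_ind (R : realType) m n' j : forall (X : 'M[R]_(m, n'.+1)) k (K : 'M[R]_(n'.+1, k)),
  (n'.+1 - k <= j)%N -> K^T *m K = 1%:M -> X *m K = 0 ->
  exists r (U : 'M[R]_(m, r)) (V : 'M[R]_(n'.+1, r)) (s : 'rV[R]_r),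
    [/\ U^T *m U = 1%:M, V^T *m V = 1%:M, (forall i, 0 < s 0 i),
        X = U *m diag_mx s *m V^T & V^T *m K = 0].
Proof.
move: j; apply: ltn_ind => j IH X k K hj hK hXK.
have [->|Xnz] := eqVneq X 0.
  exists 0%N, 0, 0, 0; split; try by rewrite ?flatmx0 ?thinmx0.
  - by move=> i; case: i.
  - by rewrite !mul0mx.
have [mu [v [mupos hvv hv]]] := eig_pos Xnz.
set vc := v^T.
have hvv' : vc^T *m vc = 1%:M by rewrite trmxK.
have hO1 : vc^T *m K = 0.
  rewrite trmxK; apply/eqP.
  suff : mu *: (v *m K) == 0 by rewrite scaler_eq0 (gt_eqF mupos).
  by rewrite scalemxAl -hv -!mulmxA hXK !mulmx0.
have hO2 : K^T *m vc = 0 by rewrite -[vc]trmxK -trmx_mul hO1 trmx0.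
set K' := row_mx K vc.
have hK' : K'^T *m K' = 1%:M.
  by rewrite tr_row_mx mul_col_row hK hO1 hO2 hvv' -scalar_mx_block.
set sig := Num.sqrt mu.
have sigpos : 0 < sig by rewrite sqrtr_gt0.
set uc := sig^-1 *: (X *m vc).
set X1 := X - X *m vc *m vc^T.
have hX1K : X1 *m K' = 0.
  rewrite mul_mx_row /X1 !mulmxBl -!mulmxA hO1 hvv' hXK !mulmx0 mulmx1 subrr.
  by rewrite subrr row_mx0.
have hk : (k + 1 <= n'.+1)%N.
  have := mxrankM_maxr K'^T K'; rewrite hK' mxrank1 => h.
  exact: leq_trans h (rank_leq_row _).
have [r1 [U1 [V1 [s1 [hU1 hV1 hs1 hX1 hV1K]]]]] :
    exists r (U : 'M[R]_(m, r)) (V : 'M[R]_(n'.+1, r)) (s : 'rV[R]_r),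
    [/\ U^T *m U = 1%:M, V^T *m V = 1%:M, (forall i, 0 < s 0 i),
        X1 = U *m diag_mx s *m V^T & V^T *m K' = 0].
  apply: (IH (n'.+1 - (k + 1))%N) => //; lia.
have [hV1K1 hV1v] : V1^T *m K = 0 /\ V1^T *m vc = 0.
  by apply: eq_row_mx; rewrite -mul_mx_row row_mx0.
have hvV1 : vc^T *m V1 = 0 by rewrite -[V1]trmxK -trmx_mul hV1v trmx0.
have hvB : vc^T *m X^T *m X = mu *: vc^T by rewrite trmxK -mulmxA hv.
have hsig2 : sig * sig = mu by rewrite -expr2 sqr_sqrtr // ltW.
have huX1 : uc^T *m X1 = 0.
  rewrite /uc linearZ /= trmx_mul -scalemxAl /X1 mulmxBr hvB !mulmxA hvB.
  by rewrite -!scalemxAl hvv' mul1mx subrr scaler0.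
have huU1 : uc^T *m U1 = 0.
  have e : uc^T *m U1 *m diag_mx s1 = 0.
    have -> : uc^T *m U1 *m diag_mx s1 = uc^T *m X1 *m V1.
      by rewrite hX1 !mulmxA -(mulmxA _ V1^T) hV1 mulmx1.
    by rewrite huX1 mul0mx.
  apply/rowP => i; have := congr1 (fun M : 'rV[R]_r1 => M 0 i) e.
  rewrite mul_mx_diag [LHS]mxE [RHS]mxE => /eqP; rewrite mulf_eq0 (gt_eqF (hs1 i)) orbF => /eqP ->.
  by rewrite [RHS]mxE.
have hU1u : U1^T *m uc = 0 by rewrite -[uc]trmxK -trmx_mul huU1 trmx0.
have sigV : sig^-1 * sig = 1 by rewrite mulVf // gt_eqF.
have huu : uc^T *m uc = 1%:M.
  have tZ : forall a (M : 'cV[R]_m), (a *: M)^T = a *: M^T.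
    by move=> a M; apply/matrixP => a1 b1; rewrite !mxE.
  rewrite /uc tZ -scalemxAr -scalemxAl trmx_mul mulmxA hvB -scalemxAl hvv'.
  by rewrite !scalerA -hsig2 mulrA mulrAC sigV mul1r mulVf ?gt_eqF // scale1r.
exists (1 + r1)%N, (row_mx uc U1), (row_mx vc V1), (row_mx (sig%:M) s1); split.
- by rewrite tr_row_mx mul_col_row huu huU1 hU1u hU1 -scalar_mx_block.
- by rewrite tr_row_mx mul_col_row hvv' hvV1 hV1v hV1 -scalar_mx_block.
- move=> i; rewrite -(splitK i); case: (split i) => jj /=.
    by rewrite row_mxEl mxE (ord1 jj) eqxx mulr1n.
  by rewrite row_mxEr.
- rewrite diag_mx_row mul_row_block tr_row_mx mul_row_col !mulmx0 addr0 add0r -hX1.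
  have -> : diag_mx (sig%:M : 'rV[R]_1) = sig%:M.
    by apply/matrixP => a b; rewrite !mxE !ord1 eqxx.
  rewrite mul_mx_scalar /uc scalerA mulrC sigV scale1r /X1.
  by rewrite addrC subrK.
- by rewrite tr_row_mx mul_col_mx hO1 hV1K1 col_mx0.
Qed.

Lemma svd_exists (R : realType) m n (X : 'M[R]_(m, n)) : exists Q, is_polar_of X Q.
Proof.
case: n X => [|n'] X.
  exists 0, 0%N, 0, 0, 0; split; rewrite ?flatmx0 ?thinmx0 //; by case.
have [r [U [V [s [hU hV hs hX _]]]]] :
  exists r (U : 'M[R]_(m, r)) (V : 'M[R]_(n'.+1, r)) (s : 'rV[R]_r),
    [/\ U^T *m U = 1%:M, V^T *m V = 1%:M, (forall i, 0 < s 0 i),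
        X = U *m diag_mx s *m V^T & V^T *m (0 : 'M[R]_(n'.+1, 0)) = 0].
  by apply: (@svd_ind R m n' n'.+1 X 0%N 0); rewrite ?subn0 ?flatmx0 ?thinmx0.
by exists (U *m V^T), r, U, V, s.
Qed.

Theorem mainTheorem2 (R : realType) (m n : nat) (S : 'M[R]_n)
    (S_diag : is_diag_mx S) (S_pos : forall i, 0 < S i i)
    (G : 'M[R]_(m, n)) (G_nz : G != 0) :
  0 < frob G (PolarFactor (G *m S)).
Proof.
rewrite /PolarFactor; case: excluded_middle_informative => [h|hn]; last first.
  by exfalso; apply: hn; apply: svd_exists.
case: (constructive_indefinite_description _ h) => Q /= [r [U [V [s [hU hV hs hX hQ]]]]].
move/diag_mxP: S_diag => [d Sd].
have dpos : forall i, 0 < d 0 i by move=> i; have := S_pos i; rewrite Sd mxE eqxx mulr1n.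
set T := diag_mx (\row_i (d 0 i)^-1).
have ST : S *m T = 1%:M.
  rewrite Sd mulmx_diag; apply/matrixP => i j; rewrite !mxE.
  by case: eqP => [->|]; rewrite ?mulr1n ?mulr0n // mulfV // gt_eqF.
have GE : G = U *m diag_mx s *m V^T *m T by rewrite -hX -mulmxA ST mulmx1.
have GQ : G^T *m Q = T *m V *m diag_mx s *m V^T.
  rewrite {1}GE hQ !trmx_mul trmxK !tr_diag_mx !mulmxA -(mulmxA _ U^T U) hU mulmx1.
  done.
rewrite /frob GQ.
case: r U V s hU hV hs hX hQ GE GQ => [|r] U V s hU hV hs hX hQ GE GQ.
  by move: G_nz; rewrite GE thinmx0 !mul0mx eqxx.
have tpos : forall i, 0 < (d 0 i)^-1 by move=> i; rewrite invr_gt0.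
have E : forall i, (T *m V *m diag_mx s *m V^T) i i =
    \sum_k (d 0 i)^-1 * V i k ^+ 2 * s 0 k.
  move=> i; rewrite mxE; apply: eq_bigr => k _.
  rewrite mul_mx_diag mul_diag_mx !mxE; ring.
rewrite /mxtrace (eq_bigr _ (fun i _ => E i)) exchange_big /=.
have ge0 : forall k i, 0 <= (d 0 i)^-1 * V i k ^+ 2 * s 0 k.
  move=> k i; apply: mulr_ge0; last exact: ltW.
  by apply: mulr_ge0; [exact: ltW | exact: sqr_ge0].
rewrite (bigD1 ord0) //=.
have h2 : 0 <= \sum_(k < r.+1 | k != ord0) \sum_i (d 0 i)^-1 * V i k ^+ 2 * s 0 k.
  by apply: sumr_ge0 => k _; apply: sumr_ge0 => i _.
suff h1 : 0 < \sum_i (d 0 i)^-1 * V i ord0 ^+ 2 * s 0 ord0 by lra.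
case: (boolP [exists i, V i ord0 != 0]) => [/existsP [i Vi] | /existsPn H].
  rewrite (bigD1 i) //=.
  have h3 : 0 <= \sum_(i0 < n | i0 != i) (d 0 i0)^-1 * V i0 ord0 ^+ 2 * s 0 ord0.
    by apply: sumr_ge0 => i0 _.
  suff : 0 < (d 0 i)^-1 * V i ord0 ^+ 2 * s 0 ord0 by lra.
  have hv2 : 0 < V i ord0 ^+ 2 by rewrite lt_def sqrf_eq0 Vi sqr_ge0.
  by apply: mulr_gt0; [apply: mulr_gt0|].
exfalso; have := congr1 (fun M : 'M[R]_r.+1 => M ord0 ord0) hV.
rewrite !mxE big1 ?eqxx => [/eqP|i _]; first by rewrite eq_sym mulr1n oner_eq0.
by rewrite mxE (eqP (negbNE (H i))) mul0r.
Qed.
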